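(* Let $q$ be a prime power and let $n$ and $d$ be odd integers satisfying $1\le d\le n$. Let $\operatorname{Tr}:\mathbb{F}_{q^{2n}}\to\mathbb{F}_{q^2}$, $\operatorname{Tr}(x)=\sum_{k=0}^{n-1}x^{q^{2k}}$. For $a_0\in\mathbb{F}_{q^n}$ and $a_1,\dots,a_{(n-d)/2}\in\mathbb{F}_{q^{2n}}$ define \[ H(x,y)=\operatorname{Tr}\bigg(a_0xy^{q^n}+\sum_{j=1}^{(n-d)/2}\big(a_jxy^{q^{n-2j}}+(a_j)^qx^{q^{n-2j+1}}y^q\big)\bigg),\qquad x,y\in\mathbb{F}_{q^{2n}}. \] Then, as $a_0$ ranges over $\mathbb{F}_{q^n}$ and $a_1,\dots,a_{(n-d)/2}$ range over $\mathbb{F}_{q^{2n}}$, these mappings $H$ are Hermitian forms on $\mathbb{F}_{q^{2n}}$ (viewed as an $n$-dimensional vector space over $\mathbb{F}_{q^2}$) and, identified with matrices in $X(n,q)$, they form an additive $d$-code in $X(n,q)$ of size $q^{n(n-d+1)}$.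
   Context: $X(n,q)$ is the set of $n\times n$ Hermitian matrices over $\mathbb{F}_{q^2}$ (matrices $A$ with $A^*=A$, where $A^*$ is the transpose of the matrix obtained by applying $x\mapsto x^q$ to each entry). A Hermitian form on an $n$-dimensional $\mathbb{F}_{q^2}$-vector space $V$ is a map $H:V\times V\to\mathbb{F}_{q^2}$ that is $\mathbb{F}_{q^2}$-linear in the first argument and satisfies $H(y,x)=H(x,y)^q$. Fixing a basis $\xi_1,\dots,\xi_n$ of $V$, $H$ is identified with the Hermitian matrix $(H(\xi_i,\xi_j))_{i,j}$; this is a bijection between Hermitian forms and $X(n,q)$, and the matrix rank equals $n-\dim\{x\in V:H(x,y)=0\ \forall y\}$. $\mathbb{F}_{q^n}$ is regarded as the subfield of $\mathbb{F}_{q^{2n}}$ of that order. A nonempty subset $Y\subseteq X(n,q)$ is a $d$-code if $\operatorname{rank}(A-B)\ge d$ for all distinct $A,B\in Y$; it is additive if it is a subgroup of $(X(n,q),+)$. *)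

(* Defs.v *)
From HB Require Import structures.
From mathcomp Require Import all_boot all_order all_algebra all_field.
Set Implicit Arguments. Unset Strict Implicit. Unset Printing Implicit Defensive.
Import GRing.Theory.
Local Open Scope ring_scope.

Section Defs.
Variables (K : finFieldType) (L : fieldExtType K).

Definition TrL (q n : nat) (x : L) : L := \sum_(k < n) x ^+ (q ^ (2 * k)).

(* the element of K corresponding to v \in 1%VS (coordinate of v on the basis [1]) *)
Definition toK (v : L) : K := coord [tuple (1 : L)] ord0 v.

(* H(x,y) = Tr( a0 x y^(q^n) + sum_{j=1}^{(n-d)/2} (a_j x y^(q^(n-2j)) + a_j^q x^(q^(n-2j+1)) y^q) ),
   with a_j written as a (j-1), j-1 : 'I_((n-d)/2) *)
Definition Hform (q n d : nat) (a0 : L) (a : 'I_((n - d)./2) -> L) (x y : L) : L :=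
  TrL q n (a0 * x * y ^+ (q ^ n)
           + \sum_(i < (n - d)./2)
               (a i * x * y ^+ (q ^ (n - 2 * i.+1))
                + a i ^+ q * x ^+ (q ^ (n - 2 * i.+1).+1) * y ^+ q)).

(* Hermitian form on L (as a K-vector space), K = F_{q^2}, conjugation z |-> z^q *)
Definition hermitian_form (q : nat) (H : L -> L -> L) : Prop :=
  [/\ forall x y, H x y \in 1%VS,
      forall (c : K) x x' y, H (c *: x + x') y = c%:A * H x y + H x' y
    & forall x y, H y x = H x y ^+ q].

Definition gram_mx (n : nat) (xi : n.-tuple L) (H : L -> L -> L) : 'M[K]_n :=
  \matrix_(i < n, j < n) toK (H (tnth xi i) (tnth xi j)).
End Defs.

Definition hermitian_mx (K : finFieldType) (q n : nat) (A : 'M[K]_n) : bool :=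
  (map_mx (fun x => x ^+ q) A)^T == A.
Arguments Hform {K L} q n d a0 a x y.

(* Main.v *)
From HB Require Import structures.
From mathcomp Require Import all_boot all_order all_algebra all_field.
From mathcomp Require Import zify ring.
Require Import Defs.
Import GRing.Theory.
Local Open Scope ring_scope.

Section Basics.
Variables (K : finFieldType) (L : fieldExtType K) (q n : nat).
Hypothesis hq1 : (1 < q)%N.
Hypothesis hchar : [pchar L].-nat q.
Hypothesis hK : #|K| = (q ^ 2)%N.
Hypothesis hL : \dim (fullv : {vspace L}) = n.

Local Notation Q e x := (x ^+ (q ^ e)).

Lemma QD e (x y : L) : Q e (x + y) = Q e x + Q e y.
Proof. by apply: exprDn_pchar; rewrite pnatX hchar. Qed.
Lemma qe_gt0 e : (0 < q ^ e)%N.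
Proof. by rewrite expn_gt0 (ltnW hq1). Qed.
Lemma Q0 e : Q e (0 : L) = 0.
Proof. by rewrite expr0n eqn0Ngt qe_gt0. Qed.
Lemma QN e (x : L) : Q e (- x) = - Q e x.
Proof. by apply/eqP; rewrite -subr_eq0 opprK -QD addNr Q0. Qed.
Lemma QB e (x y : L) : Q e (x - y) = Q e x - Q e y.
Proof. by rewrite QD QN. Qed.
Lemma Qsum e (I : Type) (r : seq I) (P : pred I) (F : I -> L) :
  Q e (\sum_(i <- r | P i) F i) = \sum_(i <- r | P i) Q e (F i).
Proof. exact: (big_morph (fun x => Q e x) (QD e) (Q0 e)). Qed.
Lemma QM e (x y : L) : Q e (x * y) = Q e x * Q e y.
Proof. exact: exprMn. Qed.
Lemma QQ a b (x : L) : Q a (Q b x) = Q (b + a) x.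
Proof. by rewrite -exprM -expnD. Qed.
Lemma Q_0 (x : L) : Q 0 x = x.
Proof. by rewrite expn0 expr1. Qed.
Lemma Q_1 (x : L) : x ^+ q = Q 1 x.
Proof. by rewrite expn1. Qed.

Lemma xfix (x : L) : Q (2 * n) x = x.
Proof.
have := Fermat's_little_theorem (aspacef L) x.
rewrite memvf /= => /esym/eqP.
by rewrite (_ : \dim _ = n) // hK -expnM.
Qed.

Lemma mem1P (x : L) : (x \in 1%VS) = (Q 2 x == x).
Proof.
have := Fermat's_little_theorem (1%AS : {aspace L}) x.
by rewrite /= dimv1 expn1 hK.
Qed.

Lemma Qper e (x : L) : Q (e + 2 * n) x = Q e x.
Proof. by rewrite -QQ xfix. Qed.

Lemma Qeq e1 e2 (x : L) : e1 = (e2 + 2 * n)%N -> Q e1 x = Q e2 x.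
Proof. by move=> ->; rewrite Qper. Qed.

Lemma Qinj e (x : L) : Q e x = 0 -> x = 0.
Proof. by move/eqP; rewrite expf_eq0 => /andP[_ /eqP]. Qed.

Lemma Qalg2 (c : K) : Q 2 (c%:A : L) = c%:A.
Proof. by rewrite -[c%:A]/(in_alg L c) -rmorphXn -hK expf_card. Qed.

Lemma Qalg_even e (c : K) : ~~ odd e -> Q e (c%:A : L) = c%:A.
Proof.
move=> he; rewrite -(odd_double_half e) (negbTE he) add0n -muln2 mulnC.
elim: (e./2) => [|k IH]; first by rewrite Q_0.
by rewrite mulnS addnC -QQ IH Qalg2.
Qed.

Hypothesis n_gt0 : (0 < n)%N.
Local Notation Tr := (@TrL K L q n).

Lemma TrD (x y : L) : Tr (x + y) = Tr x + Tr y.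
Proof. by rewrite /TrL -big_split; apply: eq_bigr => i _; rewrite QD. Qed.
Lemma Tr0 : Tr 0 = 0.
Proof. by rewrite /TrL big1 // => i _; rewrite Q0. Qed.
Lemma TrN (x : L) : Tr (- x) = - Tr x.
Proof. by apply/eqP; rewrite -subr_eq0 opprK -TrD addNr Tr0. Qed.
Lemma TrB (x y : L) : Tr (x - y) = Tr x - Tr y.
Proof. by rewrite TrD TrN. Qed.
Lemma Trsum (I : Type) (r : seq I) (P : pred I) (F : I -> L) :
  Tr (\sum_(i <- r | P i) F i) = \sum_(i <- r | P i) Tr (F i).
Proof. exact: (big_morph Tr TrD Tr0). Qed.
Lemma TrZ (c : K) (x : L) : Tr (c%:A * x) = c%:A * Tr x.
Proof.
rewrite /TrL mulr_sumr; apply: eq_bigr => i _.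
by rewrite QM Qalg_even // oddM.
Qed.
Lemma TrQ e (x : L) : Q e (Tr x) = Tr (Q e x).
Proof. by rewrite /TrL Qsum; apply: eq_bigr => i _; rewrite !QQ addnC. Qed.
Lemma TrQ2 (x : L) : Tr (Q 2 x) = Tr x.
Proof.
rewrite /TrL; case: n n_gt0 (xfix x) => // n' _ hx.
rewrite [LHS]big_ord_recr [RHS]big_ord_recl /= addrC; congr (_ + _).
  by rewrite QQ muln0 Q_0 -[in RHS]hx mulnS addnC.
by apply: eq_bigr => i _; rewrite QQ /bump /=; congr (_ ^+ (q ^ _)); lia.
Qed.
Lemma TrQeven s (x : L) : Tr (Q (2 * s) x) = Tr x.
Proof.
elim: s => [|s IH]; first by rewrite Q_0.
by rewrite mulnS addnC -QQ TrQ2 IH.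
Qed.
Lemma TrQev e (x : L) : ~~ odd e -> Tr (Q e x) = Tr x.
Proof.
move=> he; rewrite -(odd_double_half e) (negbTE he) add0n -muln2 mulnC.
exact: TrQeven.
Qed.
Lemma Tr_mem1 (x : L) : Tr x \in 1%VS.
Proof. by rewrite mem1P // TrQ TrQ2. Qed.

Definition FL := FinFieldExtType L.
Lemma card_FL : #|FL| = (q ^ (2 * n))%N.
Proof.
rewrite -(@card_vspacef K (finvect_type L) (Vector.class (finvect_type L : vectType K))).
by rewrite card_vspace hK -expnM hL.
Qed.

Lemma lin_roots (I : finType) (c0 : L) (e0 : nat) (c : I -> L) (e : I -> nat)
    (E : nat) (rs : seq L) :
  injective e -> (forall i, e i != e0) -> (e0 <= E)%N -> (forall i, e i <= E)%N ->
  (c0 != 0 \/ exists i, c i != 0) -> uniq rs ->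
  (forall x, x \in rs -> c0 * x ^+ e0 + \sum_i c i * x ^+ e i = 0) ->
  (size rs <= E)%N.
Proof.
move=> einj ne0 hE0 hE hnz urs hroot.
pose P : {poly L} := c0 *: 'X^e0 + \sum_i c i *: 'X^(e i).
have coefP j : P`_j = c0 * (j == e0)%:R + \sum_i c i * (j == e i)%:R.
  by rewrite coefD coefZ coefXn coef_sum; congr (_ + _); apply: eq_bigr => i _; rewrite coefZ coefXn.
have P0 : P != 0.
  case: hnz => [h0 | [i hi]].
    apply/eqP => /(congr1 (fun p : {poly L} => p`_e0)); rewrite coefP eqxx mulr1 coef0.
    rewrite big1 ?addr0; first by apply/eqP.
    by move=> i _; rewrite eq_sym (negbTE (ne0 i)) mulr0.
  apply/eqP => /(congr1 (fun p : {poly L} => p`_(e i))); rewrite coefP coef0 (negbTE (ne0 i)) mulr0 add0r.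
  rewrite (bigD1 i) //= eqxx mulr1 big1 ?addr0; first by apply/eqP.
  by move=> j hj; rewrite eq_sym (inj_eq einj) (negbTE hj) mulr0.
have sP : (size P <= E.+1)%N.
  apply/leq_sizeP => j hj; rewrite coefP.
  have -> : (j == e0) = false by apply/negbTE; rewrite neq_ltn; apply/orP; right; apply: leq_ltn_trans hE0 hj.
  rewrite mulr0 add0r big1 // => i _.
  have -> : (j == e i) = false by apply/negbTE; rewrite neq_ltn; apply/orP; right; apply: leq_ltn_trans (hE i) hj.
  by rewrite mulr0.
have := max_poly_roots P0 _ urs.
have -> : all (root P) rs.
  apply/allP => x /hroot hx; rewrite /root hornerD hornerZ hornerXn horner_sum.
  apply/eqP; rewrite -[RHS]hx; congr (_ + _); apply: eq_bigr => i _; by rewrite hornerZ hornerXn.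
move=> /(_ isT) h; rewrite -ltnS; exact: leq_trans h sP.
Qed.

Lemma Tr_nondeg (z : L) : (forall w, Tr (w * z) = 0) -> z = 0.
Proof.
move=> hw; apply/eqP; apply: contraT => hz.
have := @lin_roots 'I_n 0 0 (fun k => Q (2 * k) z) (fun k => q ^ (2 * k))%N
  (q ^ (2 * (n - 1)))%N (enum FL).
have hs : size (enum FL) = (q ^ (2 * n))%N by rewrite -cardE card_FL.
move=> H; suff : (size (enum FL) <= q ^ (2 * (n - 1)))%N.
  by rewrite hs leq_exp2l //; lia.
apply: H.
- move=> k1 k2 /eqP; rewrite eqn_exp2l // => /eqP h; apply: val_inj => /=; lia.
- by move=> i; rewrite -lt0n qe_gt0.
- by [].
- by move=> i; rewrite leq_exp2l //; have := ltn_ord i; lia.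
- by right; exists (Ordinal n_gt0); rewrite /= muln0 Q_0.
- exact: enum_uniq.
- move=> x _; rewrite mul0r add0r; rewrite -[RHS](hw x) /TrL.
  by apply: eq_bigr => i _; rewrite QM mulrC.
Qed.

Definition Pset := [set x : FL | (x : L) ^+ (q ^ n) == x].

Lemma card_Pset : #|Pset| = (q ^ n)%N.
Proof.
have qn1 : (q ^ n)%N != 1%N by rewrite -(expn0 q) eqn_exp2l // -lt0n.
apply/eqP; rewrite eqn_leq; apply/andP; split.
  have := @lin_roots 'I_1 (-1) 1 (fun _ => 1) (fun _ => q ^ n)%N (q ^ n)%N (enum Pset).
  move=> H; rewrite cardE; apply: H.
  - by move=> i j _; rewrite !ord1.
  - by [].
  - exact: qe_gt0.
  - by [].
  - by right; exists ord0; exact: oner_neq0.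
  - exact: enum_uniq.
  - move=> x hx; have : (x : FL) \in Pset by rewrite -mem_enum; exact: hx.
    rewrite inE => /eqP {}hx; rewrite big_ord1 mul1r /= hx expr1.
    by rewrite mulN1r addNr.
pose Rset := [set y : FL | (y : L) ^+ (q ^ n) + y == 0].
have cardR : (#|Rset| <= q ^ n)%N.
  have := @lin_roots 'I_1 1 1 (fun _ => 1) (fun _ => q ^ n)%N (q ^ n)%N (enum Rset).
  move=> H; rewrite cardE; apply: H.
  - by move=> i j _; rewrite !ord1.
  - by [].
  - exact: qe_gt0.
  - by [].
  - by right; exists ord0; exact: oner_neq0.
  - exact: enum_uniq.
  - move=> x hx; have : (x : FL) \in Rset by rewrite -mem_enum; exact: hx.
    rewrite inE => /eqP {}hx; rewrite big_ord1 mul1r expr1 mul1r.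
    by rewrite addrC.
pose f (x : FL) : FL := ((x : L) ^+ (q ^ n) - x : L).
pose s (y : FL) : FL := odflt 0 [pick x : FL | f x == y].
have fs x : f (s (f x)) = f x.
  rewrite /s; case: pickP => [x' /eqP -> // | /(_ x)]; by rewrite eqxx.
pose g (x : FL) := (((x : L) - (s (f x) : L) : FL), f x).
have ginj : injective g.
  move=> x1 x2 [] h1 h2; rewrite -[x1 : L](subrK (s (f x1) : L)) h1 h2.
  by rewrite subrK.
have sub : [set g x | x in FL] \subset setX Pset Rset.
  apply/subsetP => _ /imsetP [x _ ->]; rewrite in_setX; apply/andP; split; rewrite inE /g /=.
    have h : Q n (s (f x) : L) - (s (f x) : L) = Q n (x : L) - x := fs x.
    move: h; set v := (s (f x) : L); move=> h.
    change (Q n ((x:L) - v) == (x:L) - v); rewrite QB; apply/eqP.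
    have -> : Q n v = Q n (x:L) - x + v by rewrite -h subrK.
    set u := Q n (x : L); ring.
  change (Q n (Q n (x:L) - x) + (Q n (x:L) - x) == 0).
  rewrite QB QQ (_ : (n + n = 2 * n)%N); last by lia.
  by rewrite xfix; apply/eqP; set u := Q n (x : L); ring.
have := subset_leq_card sub; rewrite card_imset // cardsX card_FL.
move=> h; have := leq_trans h (leq_mul (leqnn _) cardR).
rewrite (_ : (2 * n = n + n)%N); last by lia.
by rewrite expnD leq_pmul2r // qe_gt0.
Qed.

Variable d : nat.
Hypotheses (hn : odd n) (hd : odd d) (hd1 : (1 <= d)%N) (hdn : (d <= n)%N).
Local Notation m := ((n - d)./2).

Lemma hn' : n = (2 * n./2 + 1)%N.
Proof. by rewrite -[in LHS](odd_double_half n) hn -muln2; lia. Qed.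
Lemma hd' : d = (2 * d./2 + 1)%N.
Proof. by rewrite -[in LHS](odd_double_half d) hd -muln2; lia. Qed.
Lemma hm : m = (n./2 - d./2)%N.
Proof.
have -> : (n - d = 2 * (n./2 - d./2))%N by rewrite {1}hn' {1}hd'; have := hdn; rewrite {1}hn' {1}hd'; lia.
by rewrite mul2n doubleK.
Qed.

Ltac arith := have := hn'; have := hd'; have := hm; lia.
Ltac qeq1 := first [ reflexivity | (apply: Qeq; arith) | (congr (_ ^+ (q ^ _)); arith)
  | (rewrite -[RHS]Q_0; apply: Qeq; arith) ].
Ltac qeq := first [ qeq1 | (symmetry; qeq1) ].

Lemma evenP e : ~~ odd e -> exists k, e = (2 * k)%N.
Proof.
move=> he; exists e./2; rewrite -[in LHS](odd_double_half e) (negbTE he) -muln2; lia.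
Qed.

Lemma ev_n1 : ~~ odd (n - 1).
Proof. by rewrite {1}hn' (_ : (2 * n./2 + 1 - 1 = 2 * n./2)%N) ?oddM //; lia. Qed.

Lemma ev_i (i : 'I_m) : ~~ odd (n - 2 * i.+1).+1.
Proof.
have := ltn_ord i => hi.
rewrite (_ : ((n - 2 * i.+1).+1 = 2 * (n./2 - i))%N) ?oddM //; arith.
Qed.

Definition E (a0 : L) (a : 'I_m -> L) (x y : L) : L :=
  a0 * x * y ^+ (q ^ n)
           + \sum_(i < m)
               (a i * x * y ^+ (q ^ (n - 2 * i.+1))
                + a i ^+ q * x ^+ (q ^ (n - 2 * i.+1).+1) * y ^+ q).

Lemma HformE (a0 : L) (a : 'I_m -> L) (x y : L) : Hform q n d a0 a x y = Tr (E a0 a x y).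
Proof. by []. Qed.

Lemma H_mem1 (a0 : L) (a : 'I_m -> L) (x y : L) : Hform q n d a0 a x y \in 1%VS.
Proof. exact: Tr_mem1. Qed.

Lemma E_lin (a0 : L) (a : 'I_m -> L) (c : K) (x x' y : L) :
  E a0 a (c%:A * x + x') y = c%:A * E a0 a x y + E a0 a x' y.
Proof.
rewrite /E.
have ht (i : 'I_m) :
   a i * (c%:A * x + x') * y ^+ (q ^ (n - 2 * i.+1))
   + a i ^+ q * (c%:A * x + x') ^+ (q ^ (n - 2 * i.+1).+1) * y ^+ q
 = c%:A * (a i * x * y ^+ (q ^ (n - 2 * i.+1))
   + a i ^+ q * x ^+ (q ^ (n - 2 * i.+1).+1) * y ^+ q)
   + (a i * x' * y ^+ (q ^ (n - 2 * i.+1))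
   + a i ^+ q * x' ^+ (q ^ (n - 2 * i.+1).+1) * y ^+ q).
  rewrite QD QM Qalg_even ?ev_i //.
  set u := y ^+ _; set v := x ^+ _; set w := x' ^+ _; set z := y ^+ q; ring.
rewrite (eq_bigr _ (fun i _ => ht i)) big_split /= -mulr_sumr.
set S1 := \sum_(i < m) _; set S2 := \sum_(i < m) _; set u := y ^+ _; ring.
Qed.

Lemma H_lin (a0 : L) (a : 'I_m -> L) (c : K) (x x' y : L) :
  Hform q n d a0 a (c *: x + x') y = c%:A * Hform q n d a0 a x y + Hform q n d a0 a x' y.
Proof. by rewrite !HformE -[c *: x]mulr_algl E_lin TrD TrZ. Qed.

Lemma H_sym (a0 : L) (a : 'I_m -> L) (x y : L) : Q n a0 = a0 ->
  Hform q n d a0 a y x = (Hform q n d a0 a x y) ^+ q.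
Proof.
move=> ha0; rewrite !HformE Q_1 TrQ /E QD Qsum TrD Trsum [RHS]TrD Trsum.
congr (_ + _).
  rewrite -[RHS](TrQev (n - 1)) ?ev_n1 // !QM !QQ mulrAC.
  congr (Tr (_ * _ * _)); first by rewrite -{1}ha0; qeq.
    by qeq.
  by qeq.
apply: eq_bigr => i _; have := ltn_ord i => hi.
rewrite QD !TrD addrC; congr (_ + _).
  rewrite !Q_1 !QM !QQ mulrAC; congr (Tr (_ * _ * _)); by qeq.
have ev2 : ~~ odd (2 * n - 2) by rewrite (_ : (2 * n - 2 = 2 * (n - 1))%N) ?oddM //; lia.
rewrite !Q_1 !QM !QQ -[RHS](TrQev (2 * n - 2)) // !QM !QQ mulrAC.
congr (Tr (_ * _ * _)); first by qeq.
  by qeq.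
by qeq.
Qed.

Local Notation T := (2 * n - d)%N.

Definition hpol (a0 : L) (a : 'I_m -> L) (x : L) : L :=
  Q T a0 * Q (n - d) x + \sum_(i < m) (Q T (a i) * Q (n - d - 2 * i.+1) x
      + Q (n - d + 2 * i.+1) (a i) * Q (n - d + 2 * i.+1) x).

Lemma H_Q (a0 : L) (a : 'I_m -> L) (x y : L) :
  Q T (Hform q n d a0 a y x) = Tr (Q T y * hpol a0 a x).
Proof.
rewrite HformE TrQ /E /hpol QD Qsum TrD Trsum mulrDr mulr_sumr [RHS]TrD Trsum.
congr (_ + _).
  rewrite !QM !QQ mulrA (mulrC (Q T y)); congr (Tr (_ * _)); by qeq.
apply: eq_bigr => i _; have := ltn_ord i => hi.
rewrite QD mulrDr !TrD; congr (_ + _).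
  rewrite !QM !QQ mulrA (mulrC (Q T y)); congr (Tr (_ * _)); by qeq.
have ev3 : ~~ odd (n + 2 * i.+1 - 1).
  by rewrite (_ : (n + 2 * i.+1 - 1 = 2 * (n./2 + i.+1))%N) ?oddM //; arith.
rewrite !Q_1 -[LHS](TrQev (n + 2 * i.+1 - 1)) // !QM !QQ mulrA (mulrC (Q T y)).
congr (Tr (_ * _ * _)); first by qeq.
  by qeq.
by qeq.
Qed.

Lemma radical (a0 : L) (a : 'I_m -> L) (x : L) :
  (forall y, Hform q n d a0 a y x = 0) -> hpol a0 a x = 0.
Proof.
move=> hy; apply: Tr_nondeg => w.
have := H_Q a0 a x (Q d w); rewrite hy Q0 QQ.
rewrite (_ : Q (d + T) w = w) //; by qeq.
Qed.

Lemma hpol_roots (a0 : L) (a : 'I_m -> L) (rs : seq L) :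
  (a0 != 0 \/ exists i, a i != 0) -> uniq rs ->
  (forall x, x \in rs -> hpol a0 a x = 0) -> (size rs <= q ^ (2 * (n - d)))%N.
Proof.
move=> hnz urs hr.
pose c (j : 'I_m + 'I_m) : L := match j with inl i => Q T (a i) | inr i => Q (n - d + 2 * i.+1) (a i) end.
pose e (j : 'I_m + 'I_m) : nat := match j with inl i => q ^ (n - d - 2 * i.+1) | inr i => q ^ (n - d + 2 * i.+1) end%N.
apply: (@lin_roots _ (Q T a0) (q ^ (n - d))%N c e).
- move=> [i|i] [j|j] /= /eqP; rewrite eqn_exp2l // => /eqP h;
    have := ltn_ord i; have := ltn_ord j; try (move=> *; congr (_ _); apply: val_inj => /=; arith);
    move=> *; exfalso; arith.
- move=> [i|i] /=; rewrite eqn_exp2l //; have := ltn_ord i => hi; apply/eqP; arith.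
- by rewrite leq_exp2l //; arith.
- move=> [i|i] /=; rewrite leq_exp2l //; have := ltn_ord i => hi; arith.
- case: hnz => [h0|[i hi]]; [left | right; exists (inl i)] => /=; apply/eqP => /Qinj /eqP; apply/negP => //.
- exact: urs.
- move=> x hx; rewrite -[RHS](hr x hx) /hpol big_sumType /= -big_split /=.
  by [].
Qed.

Lemma toK_alg (c : K) : toK (c%:A : L) = c.
Proof.
have hf : free [tuple (1 : L)] by rewrite (seq1_free (1 : L)) oner_neq0.
rewrite /toK linearZ /=.
have := coord_free ord0 ord0 hf; rewrite /= => ->.
by rewrite mulr1.
Qed.

Lemma toK_spec (v : L) : v \in 1%VS -> v = (toK v)%:A.
Proof. by case/vlineP => k ->; rewrite toK_alg. Qed.

Lemma toK_M (c : K) (v : L) : toK (c%:A * v) = c * toK v.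
Proof. by rewrite mulr_algl /toK linearZ. Qed.

Lemma toK_sum (I : finType) (F : I -> L) : toK (\sum_i F i) = \sum_i toK (F i).
Proof. by rewrite /toK linear_sum. Qed.

Lemma H0 (a0 : L) (a : 'I_m -> L) (y : L) : Hform q n d a0 a 0 y = 0.
Proof.
have h := H_lin a0 a 1 0 0 y; rewrite scaler0 addr0 scale1r mul1r in h.
by have := congr1 (fun t => t - Hform q n d a0 a 0 y) h; rewrite subrr addrK.
Qed.

Lemma H_linsum (a0 : L) (a : 'I_m -> L) (y : L) (I : finType) (c : I -> K) (F : I -> L) :
  Hform q n d a0 a (\sum_i c i *: F i) y = \sum_i (c i)%:A * Hform q n d a0 a (F i) y.
Proof.
have HD u v : Hform q n d a0 a (u + v) y = Hform q n d a0 a u y + Hform q n d a0 a v y.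
  by have := H_lin a0 a 1 u v y; rewrite scale1r => ->; rewrite scale1r mul1r.
rewrite (big_morph (fun u => Hform q n d a0 a u y) HD (H0 a0 a y)).
apply: eq_bigr => i _.
by have := H_lin a0 a (c i) (F i) 0 y; rewrite addr0 H0 addr0.
Qed.

Lemma rank_ge (xi : n.-tuple L) (hxi : basis_of fullv xi) (a0 : L) (a : 'I_m -> L) :
  Q n a0 = a0 -> (a0 != 0 \/ exists i, a i != 0) ->
  (d <= \rank (gram_mx xi (Hform q n d a0 a)))%N.
Proof.
move=> ha0 hnz.
set G := gram_mx xi _.
suff hr : (\rank (kermx G) <= n - d)%N.
  by move: hr; rewrite mxrank_ker; have := rank_leq_row G; lia.
set r := \rank (kermx G).
set B := row_base (kermx G).
have BG : B *m G = 0 by apply/eqP; rewrite -sub_kermx eq_row_base.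
have hfree : free xi := basis_free hxi.
pose emb (v : 'rV[K]_n) : L := \sum_i v 0 i *: xi`_i.
have emb_inj : injective emb.
  move=> v1 v2 he; apply/rowP => j.
  by rewrite -(coord_sum_free (v1 0) j hfree) -(coord_sum_free (v2 0) j hfree) -/(emb v1) he.
pose phi (w : 'rV[K]_r) := emb (w *m B).
have phi_inj : injective phi.
  by move=> w1 w2 /emb_inj; apply: (row_free_inj (row_base_free _)).
have hroot w : hpol a0 a (phi w) = 0.
  apply: radical => y.
  set v := w *m B.
  have vG : v *m G = 0 by rewrite /v -mulmxA BG mulmx0.
  have h1 j : Hform q n d a0 a (phi w) (tnth xi j) = 0.
    have := congr1 (fun M : 'M[K]_(1, n) => M 0 j) vG.
    rewrite !mxE /phi /emb -/v H_linsum => hs.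
    transitivity ((\sum_i v 0 i * G i j)%:A : L); last by rewrite hs scale0r.
    rewrite -[X in _ = X]/(in_alg L _) rmorph_sum; apply: eq_bigr => i _.
    rewrite rmorphM /=; congr (_ * _); rewrite /G mxE -(tnth_nth 0); exact: toK_spec (H_mem1 _ _ _ _).
  have h2 (j : 'I_n) : Hform q n d a0 a (xi`_j) (phi w) = 0.
    by rewrite H_sym // -(tnth_nth 0) h1 expr0n eqn0Ngt (ltnW hq1).
  rewrite (coord_basis hxi (memvf y)) H_linsum big1 // => j _.
  by rewrite h2 mulr0.
have := @hpol_roots a0 a (map phi (enum 'rV[K]_r)) hnz.
rewrite map_inj_uniq // enum_uniq size_map -cardE card_mx hK mul1n -expnM.
rewrite leq_exp2l //.
move=> H; have : (2 * r <= 2 * (n - d))%N.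
  apply: H => // x /mapP [w _ ->]; exact: hroot.
lia.
Qed.

Lemma Hform_ext (a0 : L) (a b : 'I_m -> L) (x y : L) : (forall i, a i = b i) ->
  Hform q n d a0 a x y = Hform q n d a0 b x y.
Proof. by move=> hab; rewrite /Hform; congr (Tr (_ + _)); apply: eq_bigr => i _; rewrite hab. Qed.

Lemma Hform_sub (a0 b0 : L) (a b : 'I_m -> L) (x y : L) :
  Hform q n d (a0 - b0) (fun i => a i - b i) x y = Hform q n d a0 a x y - Hform q n d b0 b x y.
Proof.
rewrite !HformE -TrB; congr Tr; rewrite /E.
have ht (i : 'I_m) :
   (a i - b i) * x * y ^+ (q ^ (n - 2 * i.+1))
   + (a i - b i) ^+ q * x ^+ (q ^ (n - 2 * i.+1).+1) * y ^+ q
 = (a i * x * y ^+ (q ^ (n - 2 * i.+1))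
   + a i ^+ q * x ^+ (q ^ (n - 2 * i.+1).+1) * y ^+ q)
   - (b i * x * y ^+ (q ^ (n - 2 * i.+1))
   + b i ^+ q * x ^+ (q ^ (n - 2 * i.+1).+1) * y ^+ q).
  rewrite !Q_1 QB.
  set u := y ^+ _; set v := x ^+ _; set w := Q 1 (a i); set z := Q 1 y; set t := Q 1 (b i); ring.
rewrite (eq_bigr _ (fun i _ => ht i)) sumrB.
set S1 := \sum_(i < m) _; set S2 := \sum_(i < m) _; set u := y ^+ _; ring.
Qed.

Definition fmap (xi : n.-tuple L) (p : FL * {ffun 'I_m -> FL}) : 'M[K]_n :=
  gram_mx xi (Hform q n d (p.1 : L) (fun i => (p.2 i : L))).

Definition psub (p1 p2 : FL * {ffun 'I_m -> FL}) : FL * {ffun 'I_m -> FL} :=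
  (((p1.1 : L) - p2.1 : L) : FL, [ffun i => ((p1.2 i : L) - p2.2 i : L) : FL]).

Lemma fmap_sub (xi : n.-tuple L) p1 p2 : fmap xi p1 - fmap xi p2 = fmap xi (psub p1 p2).
Proof.
apply/matrixP => i j; rewrite /fmap !mxE /psub /=.
rewrite [in RHS](Hform_ext _ _ (fun k => (p1.2 k : L) - p2.2 k)); last by move=> k; rewrite ffunE.
by rewrite Hform_sub /toK linearB.
Qed.

Definition par := setX Pset [set: {ffun 'I_m -> FL}].

Lemma parP (p : FL * {ffun 'I_m -> FL}) : (p \in par) = ((p.1 : L) ^+ (q ^ n) == p.1).
Proof. by case: p => x f; rewrite in_setX !inE andbT. Qed.

Lemma psub_par {p1 p2} : p1 \in par -> p2 \in par -> psub p1 p2 \in par.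
Proof.
rewrite !parP => /eqP h1 /eqP h2; apply/eqP => /=.
by rewrite QB h1 h2.
Qed.

Lemma rank_par (xi : n.-tuple L) (hxi : basis_of fullv xi) p1 p2 : p1 \in par -> p2 \in par -> p1 != p2 ->
  (d <= \rank (fmap xi p1 - fmap xi p2)%R)%N.
Proof.
move=> h1 h2 hne; rewrite fmap_sub.
have := psub_par h1 h2; rewrite parP => /eqP hfix.
apply: rank_ge => //.
case: (boolP ((p1.1 : L) - p2.1 == 0)) => h0; last by left.
case: (boolP [forall i, (p1.2 i : L) - p2.2 i == 0]) => hall.
  exfalso; move/negP: hne; apply; apply/eqP.
  clear hfix h1 h2; case: p1 p2 h0 hall => [x1 f1] [x2 f2] /= /eqP h0 /forallP hall.
  congr (_, _); first by apply/eqP; rewrite -subr_eq0; apply/eqP.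
  apply/ffunP => i; apply/eqP; rewrite -subr_eq0; exact: hall.
right; move/forallPn: hall => [i hi]; exists i; rewrite /psub /= ffunE; exact: hi.
Qed.

Lemma main (xi : n.-tuple L) (hxi : basis_of fullv xi) :
  (forall (a0 : L) (a : 'I_((n - d)./2) -> L), a0 ^+ (q ^ n) = a0 ->
      hermitian_form q (Hform q n d a0 a))
  /\
  exists Y : {set 'M[K]_n},
    [/\ forall A : 'M[K]_n, A \in Y <->
          exists (a0 : L) (a : 'I_((n - d)./2) -> L),
            a0 ^+ (q ^ n) = a0 /\ A = gram_mx xi (Hform q n d a0 a),
        forall A, A \in Y -> hermitian_mx q A,
        (0 \in Y) /\ (forall A B, A \in Y -> B \in Y -> A - B \in Y),
        forall A B, A \in Y -> B \in Y -> A != B -> (d <= \rank (A - B)%R)%N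
      & #|Y| = (q ^ (n * (n - d + 1)))%N].
Proof.
split.
  move=> a0 a ha0; split.
  - by move=> x y; exact: H_mem1.
  - by move=> c x x' y; exact: H_lin.
  - by move=> x y; exact: H_sym.
exists (fmap xi @: par); split.
- move=> A; split.
    case/imsetP => p hp ->; exists (p.1 : L), (fun i => (p.2 i : L)); split => //.
    by move: hp; rewrite parP => /eqP.
  move=> [a0 [a [ha0 ->]]]; apply/imsetP.
  exists ((a0 : FL), [ffun i => (a i : FL)]).
    by rewrite parP; apply/eqP.
  apply/matrixP => i j; rewrite /fmap !mxE /=.
  by rewrite [in RHS](Hform_ext _ _ a) // => k; rewrite ffunE.
- move=> _ /imsetP [p hp ->]; apply/eqP/matrixP => i j; rewrite /fmap !mxE.
  rewrite H_sym; last by move: hp; rewrite parP => /eqP.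
  rewrite (toK_spec _ (H_mem1 _ _ (tnth xi i) (tnth xi j))).
  rewrite -[_%:A ^+ q]/(in_alg L _ ^+ q) -rmorphXn /= !toK_alg -exprM.
  by rewrite (_ : (q * q = #|K|)%N) ?expf_card // hK.
- have hsub A B : A \in fmap xi @: par -> B \in fmap xi @: par -> A - B \in fmap xi @: par.
    move=> /imsetP [p1 h1 ->] /imsetP [p2 h2 ->]; rewrite fmap_sub.
    by apply: imset_f; apply: psub_par.
  split => //.
  have h0 : fmap xi (0 : FL, [ffun => 0 : FL]) \in fmap xi @: par.
    by apply: imset_f; rewrite parP; apply/eqP; exact: Q0.
  by have := hsub _ _ h0 h0; rewrite subrr.
- move=> A B /imsetP [p1 h1 ->] /imsetP [p2 h2 ->] hne.
  apply: rank_par => //; apply: contraNneq hne => ->; by [].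
rewrite card_in_imset.
  rewrite cardsX cardsT card_ffun card_ord card_Pset card_FL -expnM -expnD.
  congr (q ^ _)%N; have := hm; have := hn'; have := hd'; have := hdn; nia.
move=> p1 p2 h1 h2 he; apply/eqP; apply: contraT => hne.
have := @rank_par xi hxi p1 p2 h1 h2 hne; rewrite he subrr mxrank0; lia.
Qed.

End Basics.

Theorem theorem4p2 (K : finFieldType) (L : fieldExtType K) (q n d : nat)
  (hq : exists p k : nat, [/\ prime p, (0 < k)%N & q = (p ^ k)%N])
  (hK : #|K| = (q ^ 2)%N) (hL : \dim (fullv : {vspace L}) = n)
  (hn : odd n) (hd : odd d) (hd1 : (1 <= d)%N) (hdn : (d <= n)%N)
  (xi : n.-tuple L) (hxi : basis_of fullv xi) :
  (forall (a0 : L) (a : 'I_((n - d)./2) -> L), a0 ^+ (q ^ n) = a0 ->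
      hermitian_form q (Hform q n d a0 a))
  /\
  exists Y : {set 'M[K]_n},
    [/\ forall A : 'M[K]_n, A \in Y <->
          exists (a0 : L) (a : 'I_((n - d)./2) -> L),
            a0 ^+ (q ^ n) = a0 /\ A = gram_mx xi (Hform q n d a0 a),
        forall A, A \in Y -> hermitian_mx q A,
        (0 \in Y) /\ (forall A B, A \in Y -> B \in Y -> A - B \in Y),
        forall A B, A \in Y -> B \in Y -> A != B -> (d <= \rank (A - B)%R)%N
      & #|Y| = (q ^ (n * (n - d + 1)))%N].
Proof.
have hq1 : (1 < q)%N.
  by case: hq => p [k [pp k0 ->]]; rewrite -(exp1n k) ltn_exp2r // prime_gt1.
have hchar : [pchar L].-nat q.
  case: hq => p [k [pp k0 hqe]].
  have pK : p \in [pchar K] by apply: (@card_finPcharP K p (2 * k)) => //; rewrite hK hqe -expnM mulnC.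
  have pL : p \in [pchar L] by rewrite (pchar_lalg L) .
  by rewrite hqe pnatX (pnatE _ pp) pL.
have n_gt0 : (0 < n)%N by rewrite odd_gt0.
exact: (@main K L q n hq1 hchar hK hL n_gt0 d hn hd hd1 hdn xi hxi).
Qed.
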